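(* Let $A\in s(3)$. Then $A$ is indivisible in $s(3)$ if and only if there exist $3\times3$ permutation matrices $P,Q$ such that $$P\operatorname{sgn}(A)Q=\begin{pmatrix}0&1&1\\1&0&1\\1&1&0\end{pmatrix}.$$
   Context: $s(3)$ denotes the set of $3\times 3$ real matrices with non-negative entries whose columns each sum to $1$, a monoid under matrix multiplication whose group of units is the set of permutation matrices. $\operatorname{sgn}$ is applied entrywise ($\operatorname{sgn}(x)=1$ for $x>0$, $\operatorname{sgn}(0)=0$). $A\in s(3)$ is indivisible if for every decomposition $A=BC$ with $B,C\in s(3)$ exactly one of $B,C$ is a permutation matrix. *)

(* Defs.v *)
From mathcomp Require Import all_boot all_order all_algebra.
From mathcomp Require Import reals.
Set Implicit Arguments. Unset Strict Implicit. Unset Printing Implicit Defensive.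
Import Order.TTheory GRing.Theory Num.Theory.
Local Open Scope ring_scope.

Definition stochastic (R : realType) (n : nat) (A : 'M[R]_n) : Prop :=
  (forall i j, 0 <= A i j) /\ (forall j, \sum_(i < n) A i j = 1).

Definition sgn_mx (R : realType) (n : nat) (A : 'M[R]_n) : 'M[R]_n :=
  map_mx (fun x => Num.sg x) A.

Definition indivisible (R : realType) (n : nat) (A : 'M[R]_n) : Prop :=
  forall B C : 'M[R]_n, stochastic B -> stochastic C -> A = B *m C ->
    (is_perm_mx B && ~~ is_perm_mx C) || (~~ is_perm_mx B && is_perm_mx C).

Definition J3 (R : realType) : 'M[R]_3 :=
  \matrix_(i < 3, j < 3) (i != j)%:R.

(* Main.v *)
Require Import Defs.
From mathcomp Require Import all_boot all_order all_algebra.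
From mathcomp Require Import reals.
From mathcomp Require Import all_fingroup.
From mathcomp Require Import ring lra.
Import Order.TTheory GRing.Theory Num.Theory.
Set Implicit Arguments. Unset Strict Implicit. Unset Printing Implicit Defensive.

Definition i0 : 'I_3 := @Ordinal 3 0 isT.
Definition i1 : 'I_3 := @Ordinal 3 1 isT.
Definition i2 : 'I_3 := @Ordinal 3 2 isT.

Lemma ord3P (k : 'I_3) : k = i0 \/ k = i1 \/ k = i2.
Proof.
case: k => [[|[|[|m]]] Hm].
- by left; apply: val_inj.
- by right; left; apply: val_inj.
- by right; right; apply: val_inj.
- by [].
Qed.

Definition all3 (f : 'I_3 -> bool) := [&& f i0, f i1 & f i2].
Definition ex3 (f : 'I_3 -> bool) := [|| f i0, f i1 | f i2].
Definition one3 (f : 'I_3 -> bool) := (f i0 + f i1 + f i2 == 1)%N.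

Lemma all3P (f : 'I_3 -> bool) : reflect (forall i, f i) (all3 f).
Proof.
apply: (iffP and3P) => [[h0 h1 h2] i|h]; last by split; apply: h.
by case: (ord3P i) => [->|[->|->]].
Qed.

Lemma ex3P (f : 'I_3 -> bool) : reflect (exists i, f i) (ex3 f).
Proof.
apply: (iffP or3P) => [[h|h|h]|[i]]; try by eexists; exact: h.
by case: (ord3P i) => [->|[->|->]] h; [constructor 1|constructor 2|constructor 3].
Qed.

Lemma one3P (f : 'I_3 -> bool) : reflect (exists i, f i /\ forall k, f k -> k = i) (one3 f).
Proof.
rewrite /one3.
case E0: (f i0); case E1: (f i1); case E2: (f i2) => /=; constructor.
all: try (move=> [i [hi hk]]; case: (ord3P i) hi hk => [->|[->|->]] hi hk;
  rewrite ?E0 ?E1 ?E2 in hi; try discriminate;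
  first [ by move: (hk i0 E0) => /(congr1 val)/eqP
        | by move: (hk i1 E1) => /(congr1 val)/eqP
        | by move: (hk i2 E2) => /(congr1 val)/eqP ]).
all: try (exists i0; split => // k; by case: (ord3P k) => [->|[->|->]]; rewrite ?E1 ?E2).
all: try (exists i1; split => // k; by case: (ord3P k) => [->|[->|->]]; rewrite ?E0 ?E2).
all: try (exists i2; split => // k; by case: (ord3P k) => [->|[->|->]]; rewrite ?E0 ?E1).
Qed.

Definition bmx := 'I_3 -> 'I_3 -> bool.
Definition colnz (p : bmx) := all3 (fun j => ex3 (fun i => p i j)).
Definition permpat (p : bmx) :=
  all3 (fun i => one3 (p i)) && all3 (fun j => one3 (fun i => p i j)).
Definition j3like (p : bmx) :=
  all3 (fun i => one3 (fun j => ~~ p i j)) && all3 (fun j => one3 (fun i => ~~ p i j)).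
Definition prodp (p q : bmx) : bmx := fun i j => ex3 (fun k => p i k && q k j).
Definition noincl (p : bmx) :=
  all3 (fun j1 => all3 (fun j2 => (j1 != j2) ==> ~~ all3 (fun i => p i j2 ==> p i j1))).

Definition stmt1 (p q : bmx) :=
  colnz p ==> colnz q ==> j3like (prodp p q) ==> (permpat p (+) permpat q).
Definition stmt2 (p : bmx) :=
  colnz p ==> ~~ permpat p ==> noincl p ==> j3like p.

Definition mk9 (b00 b01 b02 b10 b11 b12 b20 b21 b22 : bool) : bmx :=
  fun i j => match nat_of_ord i, nat_of_ord j with
  | 0, 0 => b00 | 0, 1 => b01 | 0, _ => b02
  | 1, 0 => b10 | 1, 1 => b11 | 1, _ => b12
  | _, 0 => b20 | _, 1 => b21 | _, _ => b22 end.

Definition allb (f : bool -> bool) := f true && f false.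
Lemma allbP f : allb f -> forall b, f b.
Proof. by case/andP => ? ? []. Qed.

Lemma stmt2_all : allb (fun b00 => allb (fun b01 => allb (fun b02 =>
  allb (fun b10 => allb (fun b11 => allb (fun b12 =>
  allb (fun b20 => allb (fun b21 => allb (fun b22 =>
  stmt2 (mk9 b00 b01 b02 b10 b11 b12 b20 b21 b22)))))))))).
Proof. by vm_compute. Qed.

Lemma stmt1_all : allb (fun b00 => allb (fun b01 => allb (fun b02 =>
  allb (fun b10 => allb (fun b11 => allb (fun b12 =>
  allb (fun b20 => allb (fun b21 => allb (fun b22 =>
  allb (fun c00 => allb (fun c01 => allb (fun c02 =>
  allb (fun c10 => allb (fun c11 => allb (fun c12 =>
  allb (fun c20 => allb (fun c21 => allb (fun c22 =>
  stmt1 (mk9 b00 b01 b02 b10 b11 b12 b20 b21 b22)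
        (mk9 c00 c01 c02 c10 c11 c12 c20 c21 c22))))))))))))))))))).
Proof. by vm_compute. Qed.

Lemma stmt2_ok p : stmt2 p.
Proof. have H := stmt2_all. exact: (allbP (allbP (allbP (allbP (allbP (allbP (allbP (allbP (allbP (H) (p i0 i0)) (p i0 i1)) (p i0 i2)) (p i1 i0)) (p i1 i1)) (p i1 i2)) (p i2 i0)) (p i2 i1)) (p i2 i2)). Qed.

Lemma stmt1_ok p q : stmt1 p q.
Proof. have H := stmt1_all. exact: (allbP (allbP (allbP (allbP (allbP (allbP (allbP (allbP (allbP (allbP (allbP (allbP (allbP (allbP (allbP (allbP (allbP (allbP (H) (p i0 i0)) (p i0 i1)) (p i0 i2)) (p i1 i0)) (p i1 i1)) (p i1 i2)) (p i2 i0)) (p i2 i1)) (p i2 i2)) (q i0 i0)) (q i0 i1)) (q i0 i2)) (q i1 i0)) (q i1 i1)) (q i1 i2)) (q i2 i0)) (q i2 i1)) (q i2 i2)). Qed.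

Section S.
Local Open Scope ring_scope.
Variable R : realType.
Implicit Types A B C : 'M[R]_3.

Lemma bT : (true%:R : R) = 1. Proof. by []. Qed.
Lemma bF : (false%:R : R) = 0. Proof. by []. Qed.

Definition pat A : bmx := fun i j => A i j != 0.

Lemma sum3 (F : 'I_3 -> R) : \sum_(k < 3) F k = F i0 + F i1 + F i2.
Proof.
rewrite !big_ord_recl big_ord0 addr0 addrA.
by congr (F _ + F _ + F _); apply: val_inj.
Qed.

Lemma colnz_st A : stochastic A -> colnz (pat A).
Proof.
case=> h0 h1; apply/all3P => j; apply/ex3P.
case: (boolP [exists i, A i j != 0]) => [/existsP//|/existsPn H].
have := h1 j; rewrite big1 => [|i _]; last by apply/eqP; have := H i; rewrite negbK.
by move/eqP; rewrite eq_sym oner_eq0.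
Qed.

Lemma pat_mul A B C : stochastic B -> stochastic C -> A = B *m C ->
  forall i j, pat A i j = prodp (pat B) (pat C) i j.
Proof.
case=> hB _ [hC _] -> i j; rewrite /pat /prodp /ex3 mxE sum3.
rewrite !paddr_eq0 ?mulr_ge0 ?addr_ge0 ?mulr_ge0 // !mulf_eq0.
by rewrite !negb_and !negb_or orbA.
Qed.


Lemma pm_entry (s : 'S_3) i j : (perm_mx s : 'M[R]_3) i j = (s i == j)%:R.
Proof. by rewrite /perm_mx !mxE. Qed.

Lemma sum_delta (F : 'I_3 -> R) a : \sum_k F k * (k == a)%:R = F a.
Proof.
rewrite (bigD1 a) //= eqxx mulr1 big1 ?addr0 // => k /negbTE ->.
by rewrite mulr0.
Qed.

Lemma sd1 (a : 'I_3) : \sum_(k < 3) (k == a)%:R = 1 :> R.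
Proof.
rewrite -[RHS](sum_delta (fun _ => 1) a); apply: eq_bigr => k _; by rewrite mul1r.
Qed.

Lemma permP B : stochastic B -> is_perm_mx B = permpat (pat B).
Proof.
case=> h0 h1; apply/idP/idP.
  case/is_perm_mxP => s ->; apply/andP; split; apply/all3P => i; apply/one3P.
  - exists (s i); rewrite /pat pm_entry eqxx oner_eq0; split => // k.
    by rewrite pm_entry pnatr_eq0 eqb0 negbK => /eqP.
  - exists ((s^-1)%g i); rewrite /pat pm_entry permKV eqxx oner_eq0; split => // k.
    by rewrite pm_entry pnatr_eq0 eqb0 negbK => /eqP <-; rewrite permK.
case/andP => /all3P hr /all3P hc.
pose f i := odflt i [pick j | B i j != 0].
have fP i : B i (f i) != 0.
  rewrite /f; case: pickP => //= H; have [j [hj _]] := one3P _ (hr i).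
  by have := H j; rewrite /pat in hj; rewrite hj.
have fu i j : B i j != 0 -> j = f i.
  move=> hj; have [k [_ hk]] := one3P _ (hr i).
  by rewrite (hk _ hj) (hk _ (fP i)).
have cu i j k : B i j != 0 -> B k j != 0 -> k = i.
  move=> hi hk; have [l [_ hl]] := one3P _ (hc j).
  by rewrite (hl _ hk) (hl _ hi).
have finj : injective f.
  by move=> i k e; apply: esym; apply: (cu i (f i)); [exact: fP | rewrite e; exact: fP].
apply/is_perm_mxP; exists (perm finj); apply/matrixP => i j.
rewrite pm_entry permE.
case: eqP => [<-|ne].
  have := h1 (f i); rewrite (bigD1 i) //= big1 ?addr0 // => k ki.
  by apply/eqP; apply/negP => /negP hk; move: ki; rewrite (cu _ _ _ (fP i) hk) eqxx.
by apply/eqP; apply/negP => /negP /fu e; apply: ne; rewrite e.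
Qed.

Lemma j3_of_PQ A P Q : is_perm_mx P -> is_perm_mx Q ->
  P *m sgn_mx A *m Q = J3 R -> j3like (pat A).
Proof.
case/is_perm_mxP => p -> /is_perm_mxP [q ->].
rewrite -(invgK q) -col_permE -row_permE => /matrixP H.
have key i j : (A (p i) ((q^-1)%g j) != 0) = (i != j).
  have := H i j; rewrite !mxE.
  case: eqP => [<-|ne] /=; first by move/eqP; rewrite sgr_eq0 => ->.
  by move=> e; apply/negP => /eqP z; move: e; rewrite z sgr0 => /eqP; rewrite eq_sym oner_eq0.
have key2 a b : pat A a b = ((p^-1)%g a != q b).
  by rewrite /pat -key permKV permK.
apply/andP; split; apply/all3P => a; apply/one3P.
- exists ((q^-1)%g ((p^-1)%g a)); rewrite key2 permKV eqxx; split => // k.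
  by rewrite key2 negbK => /eqP ->; rewrite permK.
- exists (p (q a)); rewrite key2 permK eqxx; split => // k.
  by rewrite key2 negbK => /eqP <-; rewrite permKV.
Qed.

Lemma PQ_of_j3 A : stochastic A -> j3like (pat A) ->
  exists P Q : 'M[R]_3, is_perm_mx P /\ is_perm_mx Q /\
     P *m sgn_mx A *m Q = J3 R.
Proof.
case=> h0 _ /andP [/all3P hr /all3P hc].
pose f j := odflt j [pick i | A i j == 0].
have fP j : A (f j) j == 0.
  rewrite /f; case: pickP => //= H; have [i [hi _]] := one3P _ (hc j).
  by have := H i; rewrite /pat negbK in hi; rewrite hi.
have cu i j : A i j == 0 -> i = f j.
  move=> hj; have [k [_ hk]] := one3P _ (hc j).
  have e1 := hk i; have e2 := hk (f j).
  rewrite /pat negbK in e1; rewrite /pat negbK in e2.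
  by rewrite (e1 hj) (e2 (fP j)).
have ru i j k : A i j == 0 -> A i k == 0 -> k = j.
  move=> hj hk; have [l [_ hl]] := one3P _ (hr i).
  have e1 := hl j; have e2 := hl k.
  rewrite /pat negbK in e1; rewrite /pat negbK in e2.
  by rewrite (e1 hj) (e2 hk).
have finj : injective f.
  by move=> j k e; apply: esym; apply: (ru (f j)); [exact: fP | rewrite e; exact: fP].
exists 1%:M, (perm_mx (perm finj)); split; first exact: is_perm_mx1.
split; first exact: perm_mx_is_perm.
rewrite mul1mx -[perm finj](invgK) -col_permE; apply/matrixP => i j.
rewrite !mxE.
set k := ((perm finj)^-1)%g j.
have fk : f k = j by rewrite -[f k](permE finj) permKV.
case: (boolP (A i k == 0)) => [z|nz].
  by rewrite (eqP z) sgr0 (cu _ _ z) fk eqxx.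
rewrite gtr0_sg ?lt_def ?nz ?h0 //; case: eqP => // e.
by move: nz; rewrite e -fk (eqP (fP k)) eqxx.
Qed.

Lemma split_incl A j1 j2 : stochastic A -> j1 != j2 ->
  (forall i, A i j2 != 0 -> A i j1 != 0) ->
  exists B C : 'M[R]_3, [/\ stochastic B, stochastic C, A = B *m C,
     ~~ is_perm_mx B & ~~ is_perm_mx C].
Proof.
case=> h0 h1 nj hinc.
pose r i := if A i j2 != 0 then A i j1 / A i j2 else 1.
have rpos i : 0 < r i.
  rewrite /r; case: ifP => // nz; apply: divr_gt0; rewrite lt_def h0 andbT //.
  exact: hinc.
pose m := Num.min (r i0) (Num.min (r i1) (r i2)).
have mpos : 0 < m by rewrite /m !lt_min !rpos.
have mle i : m <= r i.
  by case: (ord3P i) => [->|[->|->]]; rewrite /m !ge_min lexx ?orbT.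
pose t := Num.min m 1 / 2.
have tpos : 0 < t by rewrite /t divr_gt0 // lt_min mpos ltr01.
have tle : t <= 1/2.
  rewrite /t; have : Num.min m 1 <= 1 by rewrite ge_min lexx orbT.
  lra.
have t2 : forall i, 2 * t <= r i.
  move=> i; apply: le_trans (mle i); rewrite /t mulrC -mulrA mulVf ?mulr1 ?pnatr_eq0 //.
  by rewrite ge_min lexx.
have ht i : A i j2 != 0 -> 2 * t * A i j2 <= A i j1.
  move=> nz; have := t2 i; rewrite /r nz.
  have p2 : 0 < A i j2 by rewrite lt_def nz h0.
  by rewrite ler_pdivlMr.
have t1 : 1 - t != 0.
  by apply/eqP => e; move: tle; rewrite (_ : t = 1); [lra | lra].
pose B : 'M[R]_3 := \matrix_(i, j) if j == j1 then (A i j1 - t * A i j2) / (1 - t) else A i j.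
pose C : 'M[R]_3 := \matrix_(k, j) ((k == j)%:R + (j == j1)%:R * t * ((k == j2)%:R - (k == j1)%:R)).
have nj' : (j2 == j1) = false by rewrite eq_sym (negbTE nj).
have Bj2 i : B i j2 = A i j2 by rewrite mxE eq_sym (negbTE nj).
exists B, C; split.
- split=> [i j|j].
    rewrite mxE; case: ifP => _ //; apply: divr_ge0; last by lra.
    case: (boolP (A i j2 != 0)) => [nz|]; last by rewrite negbK => /eqP ->; rewrite mulr0 subr0.
    have := ht i nz; have := h0 i j2; rewrite subr_ge0; nra.
  under eq_bigr do rewrite mxE.
  case: (eqVneq j j1) => [e|ne].
    subst j.
    by rewrite -mulr_suml sumrB -mulr_sumr !h1 mulr1 divff.
  exact: h1.
- split=> [k j|j].
    rewrite mxE; case: (eqVneq j j1) => [e|ne]; last by rewrite mul0r mul0r addr0 ler0n.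
    subst j; rewrite mul1r; case: (eqVneq k j1) => [e|nk].
      subst k; rewrite (negbTE nj) sub0r mulrN1 [true%:R]/=; lra.
    case: (eqVneq k j2) => [e|nk2]; first by subst k; rewrite bT bF; lra.
    rewrite ?bF ?bT; lra.
  under eq_bigr do rewrite mxE.
  by rewrite big_split /= -mulr_sumr sumrB !sd1 subrr mulr0 addr0.
- apply/matrixP => i j; rewrite mxE.
  have Ce k : C k j = (k == j)%:R + (j == j1)%:R * t * ((k == j2)%:R - (k == j1)%:R).
    by rewrite mxE.
  under eq_bigr => k _ do rewrite Ce mulrDr mulrCA !mulrBr.
  rewrite big_split /= sumrB -!mulr_sumr !sum_delta Bj2.
  case: (eqVneq j j1) => [e|ne].
    subst j; rewrite mxE eqxx bT; field; exact: t1.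
  by rewrite bF !mul0r subrr addr0 mxE (negbTE ne).
- apply/negP => /is_perm_mxP [s hs].
  pose a := (s^-1)%g j2.
  have e1 := congr1 (fun M : 'M[R]_3 => M a j2) hs.
  have e2 := congr1 (fun M : 'M[R]_3 => M a j1) hs.
  rewrite /= !pm_entry /a permKV eqxx in e1 e2; rewrite nj' in e2.
  rewrite Bj2 in e1; rewrite mxE eqxx in e2.
  move/eqP: e2; rewrite mulf_eq0 invr_eq0 (negbTE t1) orbF subr_eq0 => /eqP e2.
  have := ht a; rewrite e1 e2 oner_eq0 => /(_ isT).
  rewrite e1 bT; lra.
- apply/negP => /is_perm_mxP [s hs].
  have := congr1 (fun M : 'M[R]_3 => M j2 j1) hs.
  rewrite /= pm_entry mxE nj' !eqxx ?bT ?bF.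
  case: (s j2 == j1); rewrite ?bT ?bF; lra.
Qed.

End S.

Lemma stoch1 (R : realType) : stochastic (1%:M : 'M[R]_3).
Proof.
split=> [i j|j]; first by rewrite mxE ler0n.
under eq_bigr do rewrite mxE.
exact: sd1.
Qed.

Lemma j3like_ext (p q : bmx) : (forall i j, p i j = q i j) -> j3like p = j3like q.
Proof. by move=> h; rewrite /j3like /all3 /one3 /= !h. Qed.

Local Open Scope ring_scope.

Theorem theorem1 (R : realType) (A : 'M[R]_3) :
  stochastic A ->
  (indivisible A <->
   exists P Q : 'M[R]_3, is_perm_mx P /\ is_perm_mx Q /\
     P *m sgn_mx A *m Q = J3 R).
Proof.
move=> hA; split.
- move=> hind.
  have npA : ~~ permpat (pat A).
    rewrite -(permP hA); apply/negP => pA.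
    have := hind A 1%:M hA (stoch1 R) (esym (mulmx1 A)).
    by rewrite pA is_perm_mx1.
  have nincl : noincl (pat A).
    apply/all3P => j1; apply/all3P => j2; apply/implyP => nj; apply/negP => /all3P inc.
    have [B [C [sB sC e nB nC]]] := split_incl hA nj (fun i => implyP (inc i)).
    by have := hind B C sB sC e; rewrite (negbTE nB) (negbTE nC).
  have := stmt2_ok (pat A); rewrite /stmt2 colnz_st // npA nincl /= => hj.
  exact: PQ_of_j3.
- case=> P [Q [hP [hQ e]]] B C sB sC eA.
  have hj := j3_of_PQ hP hQ e.
  have hp := pat_mul sB sC eA.
  have := stmt1_ok (pat B) (pat C); rewrite /stmt1 !colnz_st //=.
  rewrite -(j3like_ext hp) hj /= -(permP sB) -(permP sC).
  by case: (is_perm_mx B); case: (is_perm_mx C).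
Qed.
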